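(* Let $r\geq 1$ and $d>r$ be integers and let $A_1,\dots,A_r$ be fixed positive integers. For each $i$ let $H^{(i)}$ be any one of the sequences (indexed by positive integers $n$) $A_i^{n}n!$, $A_i^{n}n!!$, $A_i^{n}[1,\dots,n]$, $A_i^{n}\,n\#$, or $A_i^{p_n}\,p_n\#$ (the choice may depend on $i$). Then the equation $$x^d=\prod_{i=1}^r H^{(i)}_{n_i}$$ has only finitely many solutions $(x,n_1,\dots,n_r)$ with $x\in\mathbb{Z}$ and $n_1,\dots,n_r$ positive integers.
   Context: $[1,\dots,n]$ is the least common multiple of $1,\dots,n$; $n!!$ is the double factorial; $n\#$ is the product of all primes $\leq n$; $p_n$ is the $n$-th prime and $p_n\#$ is the product of the first $n$ primes. *)

(* Defs.v *)
From mathcomp Require Import all_boot all_order all_algebra.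
Set Implicit Arguments. Unset Strict Implicit. Unset Printing Implicit Defensive.

Fixpoint dfact (n : nat) : nat :=
  match n with
  | 0 => 1
  | 1 => 1
  | (m.+2) as k => k * dfact m
  end.

Definition lcm_upto (n : nat) : nat := \big[lcmn/1]_(1 <= i < n.+1) i.

Definition primorial (n : nat) : nat := \prod_(p < n.+1 | prime p) p.

(* smallest prime strictly greater than m (one exists in (m, m`! + 1]) *)
Definition next_prime (m : nat) : nat :=
  let s := [seq k <- iota m.+1 (m`!) | prime k] in head 0 s.

(* p_n, the n-th prime, 1-indexed: p_1 = 2, p_2 = 3, ... (p_0 := 1 unused) *)
Fixpoint nth_prime (n : nat) : nat :=
  match n with
  | 0 => 1
  | m.+1 => next_prime (nth_prime m)
  end.

Inductive seq_kind := KFact | KDFact | KLcm | KPrimorial | KPrimePrimorial.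

Definition H (k : seq_kind) (A n : nat) : nat :=
  match k with
  | KFact => A ^ n * n`!
  | KDFact => A ^ n * dfact n
  | KLcm => A ^ n * lcm_upto n
  | KPrimorial => A ^ n * primorial n
  | KPrimePrimorial => A ^ (nth_prime n) * primorial (nth_prime n)
  end.

(* Main.v *)
Require Import Defs.
From mathcomp Require Import all_boot all_order all_algebra.
From mathcomp Require Import zify.
Import GRing.Theory Num.Theory.
Local Open Scope ring_scope.

Section Helpers.
Local Set Implicit Arguments.
Local Unset Strict Implicit.
Local Open Scope nat_scope.

Lemma sub_prod (F : nat -> nat) a b c d :
  (forall i, 0 < F i) -> a <= b -> b <= c -> c <= d ->
  \prod_(b <= i < c) F i <= \prod_(a <= i < d) F i.
Proof.
move=> Fp ab bc cd.
rewrite (@big_cat_nat _ _ _ b a d) ?(leq_trans bc cd) // (@big_cat_nat _ _ _ c b d) //=.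
rewrite mulnA mulnC mulnA; apply: leq_pmull.
by rewrite muln_gt0 !prodn_gt0.
Qed.

Lemma decomp N M : 0 < N -> (forall p, prime p -> p %| N -> p <= M) ->
  N = \prod_(0 <= p < M.+1) p ^ logn p N.
Proof.
move=> N0 HM.
have e := widen_partn predT (leq_maxl N M).
rewrite partnT // in e.
rewrite {1}e (@big_cat_nat _ _ _ M.+1) //=; last by rewrite ltnS leq_maxr.
rewrite [X in _ * X]big1_seq ?muln1 //.
move=> i /andP[_]; rewrite mem_index_iota => /andP[Mi _].
case: (posnP (logn i N)) => [->//|]; rewrite logn_gt0 mem_primes => /and3P[pi _ di].
by have := HM _ pi di; rewrite leqNgt Mi.
Qed.

Lemma binC_ub k : 'C(2 * k + 1, k) <= 4 ^ k.
Proof.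
have E : \sum_(0 <= i < (2 * k + 1).+1) 'C(2 * k + 1, i) = 2 ^ (2 * k + 1).
  transitivity ((1 + 1) ^ (2 * k + 1)); last by [].
  rewrite big_mkord expnDn; apply: eq_bigr => i _.
  by rewrite !exp1n !muln1.
have h1 : k <= (2 * k + 1).+1 by lia.
have h2 : k < (2 * k + 1).+1 by lia.
have h3 : k.+1 < (2 * k + 1).+1 by lia.
rewrite (@big_cat_nat _ _ _ k) //= (big_ltn h2) (big_ltn h3) in E.
have e2 : 'C(2 * k + 1, k.+1) = 'C(2 * k + 1, k).
  by rewrite -[in RHS]bin_sub; [congr 'C(_,_); lia | lia].
rewrite e2 in E.
have : 2 * 'C(2 * k + 1, k) <= 2 ^ (2 * k + 1) by rewrite -E; lia.
rewrite expnD expnM (_ : 2 ^ 1 = 2) // mulnC leq_pmul2r //.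
Qed.

Lemma central_lb n : 4 ^ n <= (2 * n).+1 * 'C(2 * n, n).
Proof.
elim: n => [|n IH]; first by [].
have e1 := mul_bin_diag (2 * n.+1) n.
have e2 := mul_bin_down (2 * n).+1 n.
rewrite (_ : (2 * n.+1).-1 = (2 * n).+1) in e1; last by lia.
rewrite /= (_ : (2 * n).+1 - n = n.+1) in e2; last by lia.
rewrite expnS.
set c := 'C(2 * n, n) in IH e2 *; set c1 := 'C((2 * n).+1, n) in e1 e2.
set c2 := 'C(2 * n.+1, n.+1) in e1 *.
nia.
Qed.

Lemma prime_dvd_fact p m : prime p -> p %| m`! -> p <= m.
Proof.
move=> pp; elim: m => [|m IH]; first by rewrite dvdn1 => /eqP e; rewrite e in pp.
rewrite factS Euclid_dvdM // => /orP[/dvdn_leq -> //| /IH]; lia.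
Qed.

Lemma bin_pdiv p n m : m <= n -> prime p -> p %| 'C(n, m) -> p <= n.
Proof.
move=> mn pp d.
apply: prime_dvd_fact => //; rewrite -(bin_fact mn); exact: dvdn_mulr.
Qed.

Lemma primorial_cond m : primorial m = \prod_(0 <= p < m.+1) (if prime p then p else 1).
Proof. by rewrite /primorial -big_mkcond /= big_mkord. Qed.

Lemma mid_prod k : \prod_(k.+2 <= p < (2 * k + 1).+1) (if prime p then p else 1) <= 'C(2 * k + 1, k).
Proof.
set c := 'C(2 * k + 1, k).
have c0 : 0 < c by rewrite bin_gt0; lia.
have k2 : k <= 2 * k + 1 by lia.
have E := decomp c0 (fun p pp d => bin_pdiv k2 pp d).
rewrite [X in _ <= X]E.
have kk : k.+2 <= (2 * k + 1).+1 by lia.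
apply: leq_trans (sub_prod (fun i => pfactor_gt0 i c) (leq0n k.+2) kk (leqnn _)).
rewrite big_nat_cond [X in _ <= X]big_nat_cond.
apply: leq_prod => p; rewrite andbT => /andP[h1 h2].
case: ifP => pp; last exact: pfactor_gt0.
have pc : p %| c.
  have h3 : 0 < p <= 2 * k + 1 by lia.
  have := dvdn_fact h3; rewrite -(bin_fact k2) Euclid_dvdM // => /orP[//|].
  rewrite Euclid_dvdM // => /orP[] /(prime_dvd_fact pp); lia.
have : 0 < logn p c by rewrite logn_gt0 mem_primes pp c0.
case: (logn p c) => // l _; rewrite expnS; apply: leq_pmulr; rewrite expn_gt0 prime_gt0 //.
Qed.

Lemma primorial_ub m : primorial m <= 4 ^ m.
Proof.
elim/ltn_ind: m => m IH.
case: (leqP m 2) => m2.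
  rewrite primorial_cond; case: m m2 {IH} => [|[|[|]]] // _;
  by rewrite !big_nat_recr //= big_geq.
case: (boolP (odd m)) => om.
  have [k ek] : exists k, m = 2 * k + 1 by exists m./2; rewrite -{1}(odd_double_half m) om; lia.
  rewrite primorial_cond ek (@big_cat_nat _ _ _ k.+2) //=; last by lia.
  rewrite -(primorial_cond k.+1).
  have hk : k.+1 < m by lia.
  have := IH k.+1 hk.
  have := mid_prod k; have := binC_ub k.
  rewrite (_ : 4 ^ (2 * k + 1) = 4 ^ k.+1 * 4 ^ k); last by rewrite -expnD; congr (_ ^ _); lia.
  move=> h1 h2 h3; apply: leq_mul => //; exact: leq_trans h2 h1.
have [m' em] : exists m', m = m'.+1 by exists m.-1; lia.
rewrite primorial_cond em big_nat_recr //=.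
have -> : prime m'.+1 = false.
  apply/negbTE/negP => pm; have := (even_prime pm); rewrite -em -(negbK (odd m)) om /=; lia.
rewrite muln1 -(primorial_cond m').
apply: leq_trans (IH m' _) _; first by lia.
by rewrite leq_exp2l //; lia.
Qed.


Lemma div_bounds n m : 0 < m -> 2 * (n %/ m) <= (2 * n) %/ m <= 2 * (n %/ m) + 1.
Proof.
move=> m0; apply/andP; split.
  rewrite leq_divRL // -mulnA leq_mul2l /=; exact: leq_divM.
rewrite -ltnS ltn_divLR //.
have := ltn_ceil n m0; nia.
Qed.

Lemma expn_gt0_p k p : 0 < p -> 0 < p ^ k.
Proof. by move=> h; rewrite expn_gt0 h. Qed.

Definition T n p k := (2 * n) %/ p ^ k - 2 * (n %/ p ^ k).

Lemma T_le1 n p k : 0 < p -> T n p k <= 1.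
Proof. move=> p0; have := div_bounds n (expn_gt0_p k p0); rewrite /T; lia. Qed.

Lemma T_0 n p k : 2 * n < p ^ k -> T n p k = 0.
Proof. by move=> h; rewrite /T !divn_small //; lia. Qed.

Lemma vC p n : prime p -> logn p 'C(2 * n, n) = \sum_(1 <= k < (2 * n).+1) T n p k.
Proof.
move=> pp; have p1 := prime_gt1 pp.
have nn : n <= 2 * n by lia.
have e := bin_fact nn; rewrite (_ : 2 * n - n = n) in e; last by lia.
have c0 : 0 < 'C(2 * n, n) by rewrite bin_gt0.
have := congr1 (logn p) e.
rewrite lognM ?muln_gt0 ?fact_gt0 // lognM ?fact_gt0 // !logn_fact //.
have ext : \sum_(1 <= k < n.+1) n %/ p ^ k = \sum_(1 <= k < (2 * n).+1) n %/ p ^ k.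
  have h1 : n.+1 <= (2 * n).+1 by lia.
  rewrite [RHS](@big_cat_nat _ _ _ n.+1) //=.
  rewrite [X in _ = _ + X]big1_seq ?addn0 // => k /andP[_]; rewrite mem_index_iota => /andP[h _].
  rewrite divn_small //; apply: leq_trans (ltn_expl k p1); lia.
rewrite ext.
have split : \sum_(1 <= k < (2 * n).+1) (2 * n) %/ p ^ k =
   \sum_(1 <= k < (2 * n).+1) T n p k + \sum_(1 <= k < (2 * n).+1) 2 * (n %/ p ^ k).
  rewrite -big_split /=; apply: eq_bigr => k _; rewrite /T subnK //.
  by have /andP[] := div_bounds n (expn_gt0_p k (ltnW p1)).
rewrite split -big_distrr /=; lia.
Qed.

Lemma V1 p n : prime p -> 0 < n -> p ^ logn p 'C(2 * n, n) <= 2 * n.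
Proof.
move=> pp n0; have p1 := prime_gt1 pp.
set L := trunc_log p (2 * n).
have hL : p ^ L <= 2 * n by apply: trunc_logP; lia.
have hL2 : 2 * n < p ^ L.+1 by apply: trunc_log_ltn.
have LL : L < p ^ L := ltn_expl L p1.
suff : logn p 'C(2 * n, n) <= L.
  by move=> h; apply: leq_trans hL; rewrite leq_exp2l.
rewrite vC //.
have h1 : 1 <= L.+1 by [].
have h2 : L.+1 <= (2 * n).+1 by lia.
rewrite (@big_cat_nat _ _ _ L.+1) //=.
rewrite [X in _ + X]big1_seq ?addn0; last first.
  move=> k /andP[_]; rewrite mem_index_iota => /andP[h _]; apply: T_0.
  apply: leq_trans hL2 _; rewrite leq_exp2l //.
apply: (@leq_trans (\sum_(1 <= i < L.+1) 1)).
  by apply: leq_sum => k _; apply: T_le1; lia.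
by rewrite sum_nat_const_nat; lia.
Qed.

Lemma V2 p n : prime p -> 0 < n -> 2 * n < p * p -> logn p 'C(2 * n, n) = T n p 1.
Proof.
move=> pp n0 h; have p1 := prime_gt1 pp.
rewrite vC // big_ltn; last by lia.
rewrite big1_seq ?addn0 // => k /andP[_]; rewrite mem_index_iota => /andP[hk _]; apply: T_0.
apply: leq_trans h _; rewrite (_ : p * p = p ^ 2); last by rewrite expnS expn1.
by rewrite leq_exp2l.
Qed.

Lemma div_eq x p j : 0 < p -> j * p <= x < j.+1 * p -> x %/ p = j.
Proof.
move=> p0 /andP[h1 h2]; apply/eqP; rewrite eqn_leq -ltnS ltn_divLR // leq_divRL // h1 h2 //.
Qed.

Lemma V3 p n : prime p -> 2 * n < p * p -> p <= n -> 2 * n < 3 * p -> logn p 'C(2 * n, n) = 0.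
Proof.
move=> pp h1 h2 h3; have p1 := prime_gt1 pp.
rewrite V2 //; last by lia.
rewrite /T expn1 (@div_eq (2 * n) p 2) ?(@div_eq n p 1) //; lia.
Qed.

Lemma isqrt N : exists t, t * t <= N < t.+1 * t.+1.
Proof.
elim: N => [|N [t ht]]; first by exists 0.
case: (leqP (t.+1 * t.+1) N.+1) => h.
  exists t.+1; nia.
exists t; nia.
Qed.

Lemma step6 t : 8 <= t -> t.+2 ^ 6 <= 2 * t.+1 ^ 6.
Proof.
move=> t8.
have h : 4 * t.+2 ^ 2 <= 5 * t.+1 ^ 2 by rewrite !expnS !expn0; nia.
have : (4 * t.+2 ^ 2) ^ 3 <= (5 * t.+1 ^ 2) ^ 3 by rewrite leq_exp2r.
rewrite !expnMn -!expnD.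
move: (t.+2 ^ 6) (t.+1 ^ 6) => a b.
rewrite (_ : 4 ^ 3 = 64) // (_ : 5 ^ 3 = 125) //; lia.
Qed.

Lemma pow6 t : 63 <= t -> t.+1 ^ 6 <= 2 ^ (t - 3).
Proof.
move=> ht; have [s ->] : exists s, t = s + 63 by exists (t - 63); lia.
elim: s => [|s IH].
  rewrite (_ : (0 + 63).+1 = 2 ^ 6); last by [].
  rewrite -expnM leq_exp2l; last by [].
  rewrite (_ : 0 + 63 - 3 = 60); last by [].
  by [].
rewrite (_ : s.+1 + 63 - 3 = (s + 63 - 3).+1); last by lia.
have h8 : 8 <= s + 63 by lia.
rewrite [2 ^ _.+1]expnS (_ : (s.+1 + 63).+1 = (s + 63).+2); last by lia.
apply: leq_trans (step6 h8) _.
by rewrite leq_mul2l IH orbT.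
Qed.

Lemma final_arith n t q : 2048 <= n -> t * t <= 2 * n -> 2 * n < t.+1 * t.+1 -> 3 * q <= 2 * n ->
  4 ^ n <= (2 * n).+1 * (2 * n) ^ t.+1 * 4 ^ q -> False.
Proof.
move=> hn h1 h2 h3 h.
have t63 : 63 <= t by nia.
set X := (2 * n).+1 * (2 * n) ^ t.+1 in h.
have hX : X <= (2 * n).+1 ^ t.+2.
  rewrite /X [(2 * n).+1 ^ _]expnS leq_mul2l; apply/orP; right; rewrite leq_exp2r //.
have h' : 4 ^ n <= X ^ 3.
  have : (4 ^ n) ^ 3 <= (X * 4 ^ q) ^ 3 by rewrite leq_exp2r.
  rewrite expnMn -!expnM.
  have e : n * 3 = n + 2 * n by lia.
  rewrite e expnD => h4.
  have h5 : 4 ^ (q * 3) <= 4 ^ (2 * n) by rewrite leq_exp2l //; lia.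
  have h6 : 4 ^ n * 4 ^ (2 * n) <= X ^ 3 * 4 ^ (2 * n) := leq_trans h4 (leq_mul (leqnn _) h5).
  by rewrite leq_pmul2r ?expn_gt0 in h6.
have h7 : X ^ 3 <= t.+1 ^ (6 * t.+2).
  apply: leq_trans (_ : ((2 * n).+1 ^ t.+2) ^ 3 <= _).
    by rewrite leq_exp2r.
  rewrite -expnM (_ : 6 * t.+2 = 2 * (t.+2 * 3)); last by lia.
  rewrite [t.+1 ^ _]expnM leq_exp2r; last by lia.
  by rewrite (_ : t.+1 ^ 2 = t.+1 * t.+1) //; rewrite expnS expn1.
have h8 : t.+1 ^ (6 * t.+2) <= 2 ^ ((t - 3) * t.+2).
  by rewrite expnM [2 ^ _]expnM leq_exp2r // pow6.
have h9 : 2 ^ (t * t) <= 4 ^ n.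
  rewrite (_ : 4 = 2 ^ 2) // -expnM leq_exp2l //; lia.
have := leq_trans h9 (leq_trans h' (leq_trans h7 h8)).
rewrite leq_exp2l //; nia.
Qed.

Lemma leq_prod_nat m n (F1 F2 : nat -> nat) :
  (forall i, m <= i < n -> F1 i <= F2 i) ->
  \prod_(m <= i < n) F1 i <= \prod_(m <= i < n) F2 i.
Proof.
move=> h; rewrite big_nat_cond [X in _ <= X]big_nat_cond.
by apply: leq_prod => i /andP[hi _]; apply: h.
Qed.

Lemma bertrand n : 2048 <= n -> exists2 p, prime p & n < p <= 2 * n.
Proof.
move=> hn.
case: (boolP (has (fun p => prime p && (n < p)) (iota 0 (2 * n).+1))).
  move/hasP=> [p]; rewrite mem_iota add0n => hp /andP[pp np].
  by exists p => //; rewrite np /=; lia.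
move/hasPn => H.
have H' : forall p, p <= 2 * n -> prime p -> p <= n.
  move=> p hp pp; have := H p; rewrite mem_iota pp /=; move/(_ (_ : _)); lia.
have [t /andP[ht1 ht2]] := isqrt (2 * n).
set q := (2 * n) %/ 3.
set c := 'C(2 * n, n).
have c0 : 0 < c by rewrite bin_gt0; lia.
have n0 : 0 < n by lia.
have nn : n <= 2 * n by lia.
have E := decomp c0 (fun p pp d => bin_pdiv nn pp d).
have hc : c <= \prod_(0 <= p < (2 * n).+1)
     ((if p < t.+1 then 2 * n else 1) * (if prime p && (3 * p <= 2 * n) then p else 1)).
  rewrite [X in X <= _]E; apply: leq_prod_nat => p /andP[_ hp].
  case: (boolP (prime p)) => pp; last first.
    rewrite lognE (negbTE pp) /= muln1; case: ifP => //; lia.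
  have p1 := prime_gt1 pp.
  case: (ltnP p t.+1) => pt.
    apply: leq_trans (V1 pp n0) _; apply: leq_pmulr; case: ifP => //; lia.
  have pp2 : 2 * n < p * p by nia.
  rewrite mul1n; case: (leqP (3 * p) (2 * n)) => h3.
    rewrite /= V2 //; have := @T_le1 n p 1 (ltnW p1).
    case: (T n p 1) => [|[|]] // _; rewrite ?expn0 ?expn1; lia.
  rewrite V3 //; last by apply: H'; lia.
rewrite big_split /= in hc.
have e1 : \prod_(0 <= p < (2 * n).+1) (if p < t.+1 then 2 * n else 1) = (2 * n) ^ t.+1.
  have tt : t.+1 <= (2 * n).+1 by nia.
  rewrite (@big_cat_nat _ _ _ t.+1) //= [X in _ * X]big1_seq ?muln1.
    rewrite (eq_big_nat _ _ (F2 := fun _ => 2 * n)) ?prod_nat_const_nat ?subn0 //.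
    by move=> i /andP[_ ->].
  move=> i /andP[_]; rewrite mem_index_iota => /andP[hi _]; rewrite ltnNge hi //.
have e2 : \prod_(0 <= p < (2 * n).+1) (if prime p && (3 * p <= 2 * n) then p else 1) = primorial q.
  have tt : q.+1 <= (2 * n).+1 by rewrite /q; lia.
  rewrite (@big_cat_nat _ _ _ q.+1) //= [X in _ * X]big1_seq ?muln1.
    rewrite primorial_cond; apply: eq_big_nat => i /andP[_ hi].
    have -> : 3 * i <= 2 * n by rewrite /q in hi; lia.
    by rewrite andbT.
  move=> i /andP[_]; rewrite mem_index_iota => /andP[hi _].
  have -> : 3 * i <= 2 * n = false by rewrite /q in hi; lia.
  by rewrite andbF.
rewrite e1 e2 in hc.
have hq : 3 * q <= 2 * n by rewrite /q; lia.
apply: False_ind; apply: (final_arith hn ht1 ht2 hq).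
apply: leq_trans (central_lb n) _.
rewrite -mulnA leq_mul2l; apply/orP; right.
apply: leq_trans hc _; rewrite leq_mul2l; apply/orP; right; exact: primorial_ub.
Qed.

Lemma logk p k : prime p -> 0 < k < p * p -> logn p k = (p %| k).
Proof.
move=> pp /andP[k0 kp].
case: (boolP (p %| k)) => d; last by rewrite lognE (negbTE d) !andbF.
have : 0 < logn p k by rewrite logn_gt0 mem_primes pp k0 d.
case e: (logn p k) => [|[|l]] // _.
have : p ^ 2 %| k by rewrite pfactor_dvdn // e.
move/(dvdn_leq k0); rewrite expnS expn1; lia.
Qed.

Lemma dvd_small p k : prime p -> 0 < k < 2 * p -> (p %| k) = (k == p).
Proof.
move=> pp /andP[k0 kp]; apply/idP/eqP => [/dvdnP [j ej]|->]; last exact: dvdnn.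
have p1 := prime_gt1 pp; subst k.
have j2 : j < 2 by rewrite -(ltn_pmul2r (ltnW p1)).
case: j j2 k0 {kp} => [|[|]] // _ _; exact: mul1n.
Qed.

Lemma p_odd p : prime p -> 2 < p -> exists b, p = 2 * b + 1.
Proof.
move=> pp p2; case: (even_prime pp) => [e|o]; first by lia.
exists p./2; rewrite -{1}(odd_double_half p) o; lia.
Qed.

Lemma val_fact p n : prime p -> n < 2 * p -> logn p n`! = (p <= n).
Proof.
move=> pp; have p1 := prime_gt1 pp; elim: n => [|n IH] h; first by rewrite logn1; lia.
have h1 : n < 2 * p by lia.
have h2 : 0 < n.+1 < p * p by nia.
have h3 : 0 < n.+1 < 2 * p by lia.
rewrite factS lognM ?fact_gt0 // (IH h1) (logk pp h2) (dvd_small pp h3).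
lia.
Qed.

Lemma dfact_gt0 n : 0 < dfact n.
Proof.
elim: n {-2}n (leqnn n) => [|N IH] [|[|m]] // h.
by rewrite /= muln_gt0 IH //; lia.
Qed.

Lemma dfactSS m : dfact m.+2 = m.+2 * dfact m.
Proof. by []. Qed.

Lemma val_dfact_odd p a : prime p -> 2 < p -> 2 * a + 1 < 2 * p -> logn p (dfact (2 * a + 1)) = (p <= 2 * a + 1).
Proof.
move=> pp p2; have p1 := prime_gt1 pp; have [b eb] := p_odd pp p2.
elim: a => [|a IH] h.
  rewrite /= logn1; lia.
rewrite (_ : 2 * a.+1 + 1 = (2 * a + 1).+2); last by lia.
have h1 : 2 * a + 1 < 2 * p by lia.
have h2 : 0 < (2 * a + 1).+2 < p * p by nia.
have h3 : 0 < (2 * a + 1).+2 < 2 * p by lia.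
rewrite dfactSS lognM ?dfact_gt0 // (IH h1) (logk pp h2) (dvd_small pp h3).
lia.
Qed.

Lemma val_dfact_even p a : prime p -> 2 < p -> 2 * a < 4 * p -> logn p (dfact (2 * a)) = (2 * p <= 2 * a).
Proof.
move=> pp p2; have p1 := prime_gt1 pp.
elim: a => [|a IH] h.
  rewrite /= logn1; lia.
rewrite (_ : 2 * a.+1 = (2 * a).+2); last by lia.
have h1 : 2 * a < 4 * p by lia.
have h2 : 0 < a.+1 < p * p by nia.
have h3 : 0 < a.+1 < 2 * p by lia.
rewrite dfactSS lognM ?dfact_gt0 // (IH h1).
rewrite (_ : (2 * a).+2 = 2 * a.+1); last by lia.
rewrite lognM // logn_prime // (logk pp h2) (dvd_small pp h3).
have -> : (p == 2) = false by apply/eqP; lia.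
lia.
Qed.

Lemma lcm_upto_S n : lcm_upto n.+1 = lcmn (lcm_upto n) n.+1.
Proof. by rewrite /lcm_upto big_nat_recr. Qed.

Lemma lcm_upto_gt0 n : 0 < lcm_upto n.
Proof.
elim: n => [|n IH]; first by rewrite /lcm_upto big_geq.
by rewrite lcm_upto_S lcmn_gt0 IH.
Qed.

Lemma val_lcm p n : prime p -> n < p * p -> logn p (lcm_upto n) = (p <= n).
Proof.
move=> pp; have p1 := prime_gt1 pp; elim: n => [|n IH] h.
  by rewrite /lcm_upto big_geq // logn1; lia.
have h1 : n < p * p by lia.
have h2 : 0 < n.+1 < p * p by lia.
rewrite lcm_upto_S logn_lcm ?lcm_upto_gt0 // (IH h1) (logk pp h2).
case: (boolP (p %| n.+1)) => d.
  have := dvdn_leq (ltn0Sn n) d; lia.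
have : p != n.+1 by apply: contraNneq d => ->.
move/eqP; lia.
Qed.

Lemma primorial_S n : primorial n.+1 = primorial n * (if prime n.+1 then n.+1 else 1).
Proof. by rewrite !primorial_cond big_nat_recr. Qed.

Lemma primorial_gt0 n : 0 < primorial n.
Proof.
elim: n => [|n IH]; first by rewrite primorial_cond big_nat_recr //= big_geq.
rewrite primorial_S muln_gt0 IH; case: ifP => //.
Qed.

Lemma val_primorial p n : prime p -> logn p (primorial n) = (p <= n).
Proof.
move=> pp; have p1 := prime_gt1 pp; elim: n => [|n IH].
  rewrite primorial_cond big_nat_recr //= big_geq // logn1; lia.
rewrite primorial_S lognM ?primorial_gt0 //; last by case: ifP.
rewrite IH; case: (boolP (prime n.+1)) => q.
  rewrite logn_prime //; case: eqP; lia.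
have : p != n.+1 by apply: contraNneq q => <-.
move/eqP; rewrite logn1; lia.
Qed.

Lemma next_prime_spec m : 0 < m -> prime (next_prime m) /\ m < next_prime m.
Proof.
move=> m0.
set q := pdiv (m`!.+1).
have g1 : 1 < m`!.+1 by rewrite ltnS fact_gt0.
have qp : prime q := pdiv_prime g1.
have qd : q %| m`!.+1 := pdiv_dvd _.
have mq : m < q.
  rewrite ltnNge; apply/negP => h.
  have : q %| m`! by apply: dvdn_fact; rewrite prime_gt0.
  move=> h2; move: qd; rewrite -addn1 dvdn_addr // dvdn1 => /eqP e.
  by rewrite e in qp.
have qle : q <= m`!.+1 := dvdn_leq (ltn0Sn _) qd.
have qin : q \in [seq k <- iota m.+1 m`! | prime k].
  rewrite mem_filter qp mem_iota /=; apply/andP; split => //; lia.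
have hs : forall y, y \in [seq k <- iota m.+1 m`! | prime k] -> prime y /\ m < y.
  by move=> y; rewrite mem_filter mem_iota => /andP[py /andP[h1 _]]; split.
rewrite /next_prime; move: qin hs.
case: [seq k <- iota m.+1 m`! | prime k] => [//|x s] _ hs /=; apply: hs; exact: mem_head.
Qed.

Lemma nth_prime_ge n : 0 < nth_prime n /\ n <= nth_prime n.
Proof.
elim: n => [|n [h1 h2]] //=.
have [pp lt] := next_prime_spec h1; split; [exact: prime_gt0 | lia].
Qed.

Definition mk (k : seq_kind) n := match k with
  | KDFact => if odd n then n else n./2
  | KPrimePrimorial => nth_prime n
  | _ => n end.
Definition core (k : seq_kind) n := match k with
  | KFact => n`!
  | KDFact => dfact n
  | KLcm => lcm_upto n
  | KPrimorial => primorial n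
  | KPrimePrimorial => primorial (nth_prime n) end.
Definition ex (k : seq_kind) n := match k with
  | KPrimePrimorial => nth_prime n
  | _ => n end.

Lemma H_split k A n : H k A n = A ^ ex k n * core k n.
Proof. by case: k. Qed.

Lemma core_gt0 k n : 0 < core k n.
Proof.
case: k => /=; [exact: fact_gt0 | exact: dfact_gt0 | exact: lcm_upto_gt0
  | exact: primorial_gt0 | exact: primorial_gt0].
Qed.

Lemma n_le_mk k n : n <= 2 * mk k n + 1.
Proof.
case: k => /=; try lia.
  case: ifP => o; first lia.
  rewrite -{1}(odd_double_half n) o; lia.
have := nth_prime_ge n; lia.
Qed.

Lemma core_val k n p : prime p -> 3 < p -> mk k n < 2 * p -> logn p (core k n) = (p <= mk k n).
Proof.
move=> pp p3 h; have p1 := prime_gt1 pp.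
case: k h => /= h.
- exact: val_fact.
- move: h; case: ifP => o h.
    have [a ea] : exists a, n = 2 * a + 1 by exists n./2; rewrite -{1}(odd_double_half n) o; lia.
    by subst n; apply: val_dfact_odd => //; lia.
  have [a ea] : exists a, n = 2 * a by exists n./2; rewrite -{1}(odd_double_half n) o; lia.
  subst n; have e : (2 * a)./2 = a by lia.
  rewrite e in h *; rewrite val_dfact_even //; lia.
- apply: val_lcm => //; nia.
- exact: val_primorial.
- exact: val_primorial.
Qed.

Lemma logn_prod p r (F : 'I_r -> nat) : (forall i, 0 < F i) ->
  logn p (\prod_(i < r) F i) = \sum_(i < r) logn p (F i).
Proof.
move=> Fp.
suff : \sum_(i < r) logn p (F i) = logn p (\prod_(i < r) F i) /\ 0 < \prod_(i < r) F i by case=> ->.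
apply: (big_ind2 (fun a b => a = logn p b /\ 0 < b)).
- by rewrite logn1.
- move=> x1 x2 y1 y2 [-> h1] [-> h2]; rewrite lognM // muln_gt0 h1 h2; split => //.
- by move=> i _; split.
Qed.

Lemma val_H p k A n : prime p -> 3 < p -> 0 < A -> A < p -> mk k n < 2 * p ->
  logn p (H k A n) = (p <= mk k n).
Proof.
move=> pp p3 A0 Ap h.
rewrite H_split lognM ?expn_gt0 ?A0 ?core_gt0 // lognX core_val //.
rewrite (_ : logn p A = 0) ?muln0 //.
rewrite lognE; case: (p %| A) / idP; rewrite ?andbF //.
move/(dvdn_leq A0); lia.
Qed.

Lemma mainM r d (hr : 1 <= r) (hd : r < d) (A : 'I_r -> nat) (hA : forall i, 0 < A i)
   (K : 'I_r -> seq_kind) :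
  exists C, forall a (n : 'I_r -> nat), a ^ d = \prod_(i < r) H (K i) (A i) (n i) ->
     forall i, mk (K i) (n i) <= C.
Proof.
set Amax := \max_(i < r) A i.
exists (2 * (2048 + Amax) + 1) => a n ha.
suff : \max_(i < r) mk (K i) (n i) <= 2 * (2048 + Amax) + 1.
  by move=> h i; apply: leq_trans h; apply: (leq_bigmax i).
rewrite leqNgt; apply/negP => hM.
set M := \max_(i < r) mk (K i) (n i) in hM.
have cr : 0 < #|'I_r| by rewrite card_ord.
have [i0 e0] := eq_bigmax (fun i => mk (K i) (n i)) cr.
have hn0 : 2048 <= M./2 by lia.
have [p pp /andP[hp1 hp2]] := bertrand hn0.
have p3 : 3 < p by lia.
have hMp : M < 2 * p by lia.
have hAp : forall i, A i < p.
  move=> i; apply: leq_ltn_trans (leq_bigmax i) _; rewrite -/Amax; lia.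
have hmk : forall i, mk (K i) (n i) < 2 * p.
  by move=> i; apply: leq_ltn_trans (leq_bigmax i) hMp.
have hS : logn p (\prod_(i < r) H (K i) (A i) (n i)) = \sum_(i < r) (p <= mk (K i) (n i)).
  rewrite logn_prod; last by move=> i; rewrite H_split muln_gt0 expn_gt0 hA core_gt0.
  by apply: eq_bigr => i _; rewrite val_H.
rewrite -ha lognX in hS.
have s1 : 1 <= \sum_(i < r) (p <= mk (K i) (n i)).
  rewrite (bigD1 i0) //= -e0 -/M; lia.
have s2a : \sum_(i < r) (p <= mk (K i) (n i)) <= \sum_(i < r) 1.
  by apply: leq_sum => i _; apply: leq_b1.
have s2 : \sum_(i < r) (p <= mk (K i) (n i)) <= r.
  by move: s2a; rewrite sum1_card card_ord.
rewrite -hS in s1 s2; move: s1 s2; case: (logn p a) => [|v]; rewrite ?muln0 //; nia.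
Qed.

End Helpers.

Theorem theorem6 (r d : nat) (hr : (1 <= r)%N) (hd : (r < d)%N)
    (A : 'I_r -> nat) (hA : forall i, (0 < A i)%N) (K : 'I_r -> seq_kind) :
  exists B : nat,
    forall (x : int) (n : 'I_r -> nat),
      (forall i, (0 < n i)%N) ->
      x ^+ d = ((\prod_(i < r) H (K i) (A i) (n i))%N)%:Z ->
      (`|x| <= B)%N /\ (forall i, (n i <= B)%N).
Proof.
have [C HC] := mainM hr hd hA K.
pose N := (2 * C + 1)%N.
pose G := fun i : 'I_r => (\max_(j < N.+1) H (K i) (A i) j)%N.
pose P := (\prod_(i < r) G i)%N.
exists (maxn N P) => x n _ hx.
have ha : (`|x| ^ d)%N = (\prod_(i < r) H (K i) (A i) (n i))%N.
  by have := congr1 absz hx; rewrite abszX absz_nat.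
have hn : forall i, (n i <= N)%N.
  move=> i; apply: leq_trans (n_le_mk (K i) (n i)) _; have := HC _ _ ha i; rewrite /N; lia.
split; last by move=> i; apply: leq_trans (hn i) (leq_maxl _ _).
apply: leq_trans (leq_maxr N P).
case: (posnP `|x|%N) => [-> //|x0].
apply: (@leq_trans (`|x| ^ d)%N); first by rewrite -{1}(expn1 `|x|%N) leq_pexp2l //; lia.
rewrite ha /P; apply: leq_prod => i _.
have hi : (n i < N.+1)%N by rewrite ltnS hn.
exact: (leq_bigmax (F := fun j : 'I_N.+1 => H (K i) (A i) j) (Ordinal hi)).
Qed.
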